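(* (i) $(I(\mathbb N),\tau_1)$ is a Polish topological semigroup, and $\rho$ is a complete metric compatible with $\tau_1$. (ii) $(I(\mathbb N),\tau_2)$ is a Polish topological semigroup, and $\rho^\ast$ is a complete metric compatible with $\tau_2$.
   Context: $I(\mathbb N)$ is the set of all bijections $f:A\to B$ with $A,B\subseteq\mathbb N$ (including the empty map), $\mathrm{dom}(f)=A$, $\mathrm{im}(f)=B$, under composition ($\mathrm{dom}(f\circ g)=g^{-1}(\mathrm{dom}(f)\cap\mathrm{im}(g))$). For $x,y$: $v(x,y)=\{f: x\in\mathrm{dom}(f), f(x)=y\}$, $w_1(x)=\{f: x\notin\mathrm{dom}(f)\}$, $w_2(y)=\{f: y\notin\mathrm{im}(f)\}$. $\tau_1$ is the topology generated by all $v(x,y)$, $w_1(x)$; $\tau_2$ by all $v(x,y)$, $w_2(y)$. For $f,g\in I(\mathbb N)$ and $n\in\mathbb N$ let $a_{(f,g)}(n)=0$ if $n\in\mathrm{dom}(f)\cap\mathrm{dom}(g)$ or $n\notin\mathrm{dom}(f)\cup\mathrm{dom}(g)$, and $a_{(f,g)}(n)=1$ otherwise; let $b_{(f,g)}(n)=\min\{1,|f(n)-g(n)|\}$ if $n\in\mathrm{dom}(f)\cap\mathrm{dom}(g)$ and $0$ otherwise. Define $\rho(f,g)=\sum_{n\in\mathbb N}\frac{a_{(f,g)}(n)+b_{(f,g)}(n)}{2^n}$ and $\rho^\ast(f,g)=\rho(f^{-1},g^{-1})$. *)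

(* Defs.v *)
From Stdlib Require Import Reals List ClassicalEpsilon.
From Coquelicot Require Import Coquelicot.
Open Scope R_scope.

(* A partial bijection f : A -> B with A, B subsets of nat is represented by
   its graph as a partial function nat -> option nat which is injective on
   its domain.  dom f = {n | pf f n <> None}, im f = {m | exists n, pf f n = Some m}. *)
Record PI : Type := mkPI {
  pf : nat -> option nat ;
  pf_inj : forall x y z, pf x = Some z -> pf y = Some z -> x = y }.

Definition dom (f : PI) (n : nat) : Prop := pf f n <> None.
Definition im (f : PI) (m : nat) : Prop := exists n, pf f n = Some m.

Definition comp_fun (f g : PI) (n : nat) : option nat :=
  match pf g n with Some m => pf f m | None => None end.

Lemma comp_inj (f g : PI) : forall x y z,
  comp_fun f g x = Some z -> comp_fun f g y = Some z -> x = y.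
Proof.
  intros x y z; unfold comp_fun.
  destruct (pf g x) as [a|] eqn:Ha; [|discriminate].
  destruct (pf g y) as [b|] eqn:Hb; [|discriminate].
  intros H1 H2. assert (a = b) by (eapply (pf_inj f); eauto). subst b.
  eapply (pf_inj g); eauto.
Qed.

Definition comp (f g : PI) : PI := mkPI (comp_fun f g) (comp_inj f g).

Definition inv_fun (f : PI) (m : nat) : option nat :=
  match excluded_middle_informative (exists n, pf f n = Some m) with
  | left H => Some (proj1_sig (constructive_indefinite_description _ H))
  | right _ => None
  end.

Lemma inv_inj (f : PI) : forall x y z,
  inv_fun f x = Some z -> inv_fun f y = Some z -> x = y.
Proof.
  intros x y z; unfold inv_fun.
  destruct (excluded_middle_informative (exists n, pf f n = Some x)) as [Hx|];
    [|discriminate].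
  destruct (excluded_middle_informative (exists n, pf f n = Some y)) as [Hy|];
    [|discriminate].
  destruct (constructive_indefinite_description _ Hx) as [a Ha].
  destruct (constructive_indefinite_description _ Hy) as [b Hb].
  simpl. intros E1 E2. injection E1; injection E2; intros; subst.
  rewrite Ha in Hb. injection Hb; auto.
Qed.

Definition inv (f : PI) : PI := mkPI (inv_fun f) (inv_inj f).

Definition v (x y : nat) (f : PI) : Prop := pf f x = Some y.
Definition w1 (x : nat) (f : PI) : Prop := ~ dom f x.
Definition w2 (y : nat) (f : PI) : Prop := ~ im f y.

Definition subbasis1 (S : PI -> Prop) : Prop :=
  (exists x y, S = v x y) \/ (exists x, S = w1 x).
Definition subbasis2 (S : PI -> Prop) : Prop :=
  (exists x y, S = v x y) \/ (exists y, S = w2 y).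

Definition generated_open (B : (PI -> Prop) -> Prop) (U : PI -> Prop) : Prop :=
  forall f, U f -> exists l : list (PI -> Prop),
    List.Forall B l /\ (forall S, In S l -> S f) /\
    (forall h, (forall S, In S l -> S h) -> U h).

Definition tau1 : (PI -> Prop) -> Prop := generated_open subbasis1.
Definition tau2 : (PI -> Prop) -> Prop := generated_open subbasis2.

Definition is_metric (d : PI -> PI -> R) : Prop :=
  (forall x y, 0 <= d x y) /\
  (forall x y, d x y = 0 <-> x = y) /\
  (forall x y, d x y = d y x) /\
  (forall x y z, d x z <= d x y + d y z).

Definition metric_complete (d : PI -> PI -> R) : Prop :=
  forall u : nat -> PI,
    (forall eps, 0 < eps -> exists N, forall m n, (N <= m)%nat -> (N <= n)%nat ->
        d (u m) (u n) < eps) ->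
    exists l, forall eps, 0 < eps -> exists N, forall n, (N <= n)%nat -> d (u n) l < eps.

Definition metric_open (d : PI -> PI -> R) (U : PI -> Prop) : Prop :=
  forall x, U x -> exists eps, 0 < eps /\ forall y, d x y < eps -> U y.

Definition compatible (d : PI -> PI -> R) (tau : (PI -> Prop) -> Prop) : Prop :=
  forall U, tau U <-> metric_open d U.

(* separable: a countable dense subset (enumerated by a sequence; I(N) is nonempty) *)
Definition separable (tau : (PI -> Prop) -> Prop) : Prop :=
  exists D : nat -> PI, forall U, tau U -> (exists x, U x) -> exists n, U (D n).

Definition polish (tau : (PI -> Prop) -> Prop) : Prop :=
  separable tau /\
  exists d, is_metric d /\ metric_complete d /\ compatible d tau.

Definition topological_semigroup (tau : (PI -> Prop) -> Prop) : Prop :=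
  (forall f g h, comp f (comp g h) = comp (comp f g) h) /\
  (forall f g W, tau W -> W (comp f g) ->
     exists U V, tau U /\ tau V /\ U f /\ V g /\
       forall f' g', U f' -> V g' -> W (comp f' g')).

Definition a_fg (f g : PI) (n : nat) : R :=
  match pf f n, pf g n with
  | Some _, Some _ => 0
  | None, None => 0
  | _, _ => 1
  end.

Definition b_fg (f g : PI) (n : nat) : R :=
  match pf f n, pf g n with
  | Some x, Some y => Rmin 1 (Rabs (INR x - INR y))
  | _, _ => 0
  end.

Definition rho (f g : PI) : R :=
  Series (fun n => (a_fg f g n + b_fg f g n) / 2 ^ n).

Definition rho_star (f g : PI) : R := rho (inv f) (inv g).

(* Main.v *)
From Stdlib Require Import Reals Lra Lia Cantor List ProofIrrelevance FunctionalExtensionality ClassicalEpsilon.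
From Coquelicot Require Import Coquelicot.
Require Import Defs.
Open Scope R_scope.

Definition bnd (c : nat -> R) := forall n, 0 <= c n <= 1.
Definition S2 (c : nat -> R) := Series (fun n => c n * (/2)^n).

Lemma geom_half : is_series (fun n => (/2)^n) 2.
Proof.
  assert (H : Rabs (/2) < 1) by (rewrite Rabs_pos_eq; lra).
  pose proof (is_series_geom _ H) as G.
  replace (/ (1 - /2)) with 2 in G by field. exact G.
Qed.

Lemma ex_geom : ex_series (fun n => (/2)^n).
Proof. exists 2. apply geom_half. Qed.

Lemma half_pow_pos n : 0 < (/2)^n.
Proof. apply pow_lt; lra. Qed.

Lemma ex_S2 c : (forall n, 0 <= c n <= 2) -> ex_series (fun n => c n * (/2)^n).
Proof.
  intros Hc. apply (@ex_series_le R_AbsRing R_CompleteNormedModule _ (fun n => 2 * (/2)^n)).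
  - intros n. change (norm (c n * (/2)^n)) with (Rabs (c n * (/2)^n)).
    pose proof (half_pow_pos n). specialize (Hc n).
    rewrite Rabs_pos_eq by nra. nra.
  - exists (2*2). apply (is_series_scal_l 2 _ 2). apply geom_half.
Qed.

Lemma S2_ge0 c : bnd c -> 0 <= S2 c.
Proof.
  intros Hc. unfold S2.
  assert (E : Series (fun _ => 0) = 0).
  { rewrite (Series_ext _ (fun n => 0 * (/2)^n)) by (intros; ring).
    rewrite Series_scal_l. ring. }
  rewrite <- E. apply Series_le.
  - intros n. pose proof (half_pow_pos n). specialize (Hc n). split; [lra|nra].
  - apply ex_S2. intros n; specialize (Hc n); lra.
Qed.

Lemma Series_zero : Series (fun _ => 0) = 0.
Proof.
  rewrite (Series_ext _ (fun n => 0 * (/2)^n)) by (intros; ring).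
  rewrite Series_scal_l. ring.
Qed.

Lemma Series_nonneg a : (forall n, 0 <= a n) -> ex_series a -> 0 <= Series a.
Proof.
  intros H E. rewrite <- Series_zero. apply Series_le; auto.
  intros n; split; [lra| auto].
Qed.

Lemma sum_ge a k : (forall n, 0 <= a n) -> a k <= sum_f_R0 a k.
Proof.
  intros H. destruct k; simpl. lra.
  assert (0 <= sum_f_R0 a k).
  { induction k; simpl. apply H. specialize (H (S k)). lra. }
  specialize (H (S k)). lra.
Qed.

Lemma S2_lower c k : bnd c -> c k * (/2)^k <= S2 c.
Proof.
  intros Hc. unfold S2.
  assert (Hn : forall n, 0 <= c n * (/2)^n).
  { intros n. pose proof (half_pow_pos n). specialize (Hc n). nra. }
  assert (E : ex_series (fun n => c n * (/2)^n)).
  { apply ex_S2. intros n; specialize (Hc n); lra. }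
  rewrite (Series_incr_n _ (S k)) by (auto; lia). simpl pred.
  pose proof (sum_ge (fun n => c n * (/2)^n) k Hn).
  assert (0 <= Series (fun j => c (S k + j)%nat * (/2)^(S k + j))).
  { apply Series_nonneg. intros; apply Hn.
    apply (ex_series_incr_n (fun n => c n * (/2)^n) (S k)). exact E. }
  lra.
Qed.

Lemma S2_upper c N : bnd c -> (forall n, (n <= N)%nat -> c n = 0) -> S2 c <= (/2)^N.
Proof.
  intros Hc H0. unfold S2.
  rewrite (Series_incr_n_aux _ (S N)).
  2:{ intros k Hk. rewrite H0 by lia. ring. }
  apply Rle_trans with (Series (fun k => (/2)^(S N) * (/2)^k)).
  - apply Series_le.
    + intros n. rewrite <- pow_add. pose proof (half_pow_pos (S N + n)).
      specialize (Hc (S N + n)%nat). split; nra.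
    + exists ((/2)^(S N) * 2). apply (is_series_scal_l ((/2)^(S N)) _ 2). apply geom_half.
  - rewrite Series_scal_l. pose proof (is_series_unique _ _ geom_half) as G.
    replace (Series (pow (/2))) with 2. simpl. right; field.
Qed.

Lemma S2_zero c : (forall n, c n = 0) -> S2 c = 0.
Proof.
  intros H. unfold S2. rewrite <- Series_zero. apply Series_ext. intros n; rewrite H; ring.
Qed.

Lemma S2_tri c1 c2 c3 : bnd c1 -> bnd c2 -> bnd c3 -> (forall n, c1 n <= c2 n + c3 n) ->
  S2 c1 <= S2 c2 + S2 c3.
Proof.
  intros H1 H2 H3 H. unfold S2.
  assert (E2 : ex_series (fun n => c2 n * (/2)^n)) by (apply ex_S2; intros n; specialize (H2 n); lra).
  assert (E3 : ex_series (fun n => c3 n * (/2)^n)) by (apply ex_S2; intros n; specialize (H3 n); lra).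
  rewrite <- Series_plus by assumption.
  apply Series_le.
  - intros n. pose proof (half_pow_pos n). specialize (H n). specialize (H1 n). split; nra.
  - apply (@ex_series_ext R_AbsRing R_NormedModule (fun n => (c2 n + c3 n) * (/2)^n)).
    intros; simpl; ring.
    apply ex_S2. intros n. specialize (H2 n). specialize (H3 n). lra.
    
Qed.

Definition oeq (o1 o2 : option nat) : {o1 = o2} + {o1 <> o2}.
Proof. decide equality. apply Nat.eq_dec. Defined.

Definition disc (o1 o2 : option nat) : R := if oeq o1 o2 then 0 else 1.

Lemma disc_bnd o1 o2 : 0 <= disc o1 o2 <= 1.
Proof. unfold disc; destruct oeq; lra. Qed.

Lemma disc_eq o1 o2 : disc o1 o2 = 0 <-> o1 = o2.
Proof. unfold disc; destruct oeq; split; intros; auto; try lra; contradiction. Qed.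

Lemma disc_ne o1 o2 : o1 <> o2 -> disc o1 o2 = 1.
Proof. unfold disc; destruct oeq; auto; contradiction. Qed.

Lemma disc_sym o1 o2 : disc o1 o2 = disc o2 o1.
Proof. unfold disc; destruct (oeq o1 o2), (oeq o2 o1); subst; auto; congruence. Qed.

Lemma disc_tri o1 o2 o3 : disc o1 o3 <= disc o1 o2 + disc o2 o3.
Proof.
  destruct (oeq o1 o3) as [e|n].
  - subst. rewrite (proj2 (disc_eq o3 o3) eq_refl).
    pose proof (disc_bnd o3 o2); pose proof (disc_bnd o2 o3); lra.
  - rewrite disc_ne by auto.
    destruct (oeq o1 o2) as [e|n2].
    + subst. rewrite (disc_ne o2 o3) by auto. pose proof (disc_bnd o2 o2); lra.
    + rewrite (disc_ne o1 o2) by auto. pose proof (disc_bnd o2 o3); lra.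
Qed.

Lemma INR_gap x y : (x < y)%nat -> INR x + 1 <= INR y.
Proof. intros H. rewrite <- S_INR. apply le_INR. lia. Qed.

Lemma ab_disc f g n : a_fg f g n + b_fg f g n = disc (pf f n) (pf g n).
Proof.
  unfold a_fg, b_fg, disc.
  destruct (pf f n) as [x|], (pf g n) as [y|]; destruct oeq as [e|ne];
    try discriminate; try lra.
  - injection e as ->. rewrite Rminus_diag, Rabs_R0, Rmin_right; lra.
  - assert (x <> y) by congruence.
    rewrite Rmin_left; [lra|].
    destruct (Nat.lt_gt_cases x y) as [[Hl|Hl] _]; auto.
    + pose proof (INR_gap _ _ Hl). rewrite Rabs_left; lra.
    + pose proof (INR_gap _ _ Hl). rewrite Rabs_right; lra.
  - exfalso; apply ne; reflexivity.
Qed.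

Lemma rho_eq f g : rho f g = S2 (fun n => disc (pf f n) (pf g n)).
Proof.
  unfold rho, S2. apply Series_ext. intros n. rewrite ab_disc. unfold Rdiv. rewrite pow_inv. reflexivity.
Qed.

Lemma PI_ext f g : (forall n, pf f n = pf g n) -> f = g.
Proof.
  destruct f as [p1 i1], g as [p2 i2]; simpl; intros H.
  assert (p1 = p2) by (apply functional_extensionality; auto). subst.
  f_equal. apply proof_irrelevance.
Qed.

Definition agree N (f g : PI) := forall k, (k <= N)%nat -> pf f k = pf g k.

Lemma rho_metric : is_metric rho.
Proof.
  split; [|split; [|split]].
  - intros; rewrite rho_eq; apply S2_ge0; intros n; apply disc_bnd.
  - intros f g; split.
    + intros H. apply PI_ext. intros n. apply disc_eq.
      pose proof (S2_lower (fun n => disc (pf f n) (pf g n)) n (fun n => disc_bnd _ _)).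
      rewrite <- rho_eq, H in H0. pose proof (half_pow_pos n). pose proof (disc_bnd (pf f n) (pf g n)). nra.
    + intros ->. rewrite rho_eq. apply S2_zero. intros n. apply disc_eq; auto.
  - intros f g. rewrite !rho_eq. unfold S2. apply Series_ext. intros n; rewrite disc_sym; auto.
  - intros f g h. rewrite !rho_eq. apply S2_tri; try (intros n; apply disc_bnd).
    intros n; apply disc_tri.
Qed.

Lemma rho_small N f g : agree N f g -> rho f g <= (/2)^N.
Proof.
  intros H. rewrite rho_eq. apply S2_upper. intros n; apply disc_bnd.
  intros n Hn. apply disc_eq. auto.
Qed.

Lemma rho_agree N f g : rho f g < (/2)^N -> agree N f g.
Proof.
  intros H k Hk. destruct (oeq (pf f k) (pf g k)) as [e|ne]; auto. exfalso.
  pose proof (S2_lower (fun n => disc (pf f n) (pf g n)) k (fun n => disc_bnd _ _)) as L.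
  simpl in L. rewrite disc_ne in L by auto. rewrite <- rho_eq in L.
  assert ((/2)^N <= (/2)^k).
  { rewrite !pow_inv. apply Rinv_le_contravar. apply pow_lt; lra. apply Rle_pow; lra || lia. }
  lra.
Qed.

Lemma small_exists eps : 0 < eps -> exists N, (/2)^N < eps.
Proof.
  intros He. destruct (pow_lt_1_zero (/2)) with (y := eps) as [N HN]; auto.
  rewrite Rabs_pos_eq; lra.
  exists N. specialize (HN N (le_n _)). rewrite Rabs_pos_eq in HN; auto.
  left; apply half_pow_pos.
Qed.

Lemma agree_sym N f g : agree N f g -> agree N g f.
Proof. intros H k Hk; symmetry; auto. Qed.

Lemma agree_trans N f g h : agree N f g -> agree N g h -> agree N f h.
Proof. intros H1 H2 k Hk; rewrite H1; auto. Qed.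

Lemma agree_le N M f g : (M <= N)%nat -> agree N f g -> agree M f g.
Proof. intros H1 H2 k Hk; apply H2; lia. Qed.

Lemma metric_char (phi : PI -> PI) U :
  metric_open (fun f g => rho (phi f) (phi g)) U <->
  (forall f, U f -> exists N, forall g, agree N (phi g) (phi f) -> U g).
Proof.
  split.
  - intros H f Hf. destruct (H f Hf) as [eps [He Hy]].
    destruct (small_exists eps He) as [N HN]. exists N. intros g Hg.
    apply Hy. apply agree_sym in Hg. apply rho_small in Hg. lra.
  - intros H f Hf. destruct (H f Hf) as [N HN]. exists ((/2)^N). split.
    apply half_pow_pos. intros g Hg. apply HN. apply agree_sym. apply rho_agree. exact Hg.
Qed.

Lemma gen_char (B : (PI -> Prop) -> Prop) (c : PI -> nat -> option nat)
  (H1 : forall S, B S -> exists k, forall f g, S f -> c g k = c f k -> S g)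
  (H2 : forall f k, exists S, B S /\ S f /\ forall g, S g -> c g k = c f k) U :
  generated_open B U <->
  (forall f, U f -> exists N, forall g, (forall k, (k <= N)%nat -> c g k = c f k) -> U g).
Proof.
  split.
  - intros H f Hf. destruct (H f Hf) as [l [HB [Hl HU]]].
    assert (exists N, forall g, (forall k, (k <= N)%nat -> c g k = c f k) -> forall S, In S l -> S g)
      as [N HN].
    { clear HU. induction l as [|S l IH].
      - exists 0%nat. intros g _ S [].
      - inversion HB as [|? ? HS HB']; subst.
        destruct IH as [N' HN']; auto. intros S' HS'; apply Hl; right; auto.
        destruct (H1 S HS) as [k Hk]. exists (Nat.max k N'). intros g Hg S' [<-|HS'].
        + apply (Hk f). apply Hl; left; auto. apply Hg; lia.
        + apply HN'; auto. intros k' Hk'; apply Hg; lia. }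
    exists N. intros g Hg. apply HU. apply HN; auto.
  - intros H f Hf. destruct (H f Hf) as [N HN].
    assert (exists l, List.Forall B l /\ (forall S, In S l -> S f) /\
              forall g, (forall S, In S l -> S g) -> forall k, (k <= N)%nat -> c g k = c f k)
      as [l [Hl1 [Hl2 Hl3]]].
    { clear HN. induction N as [|N IH].
      - destruct (H2 f 0%nat) as [S [HS [Sf Sg]]]. exists (S :: nil). split; [constructor; auto|].
        split. intros S' [<-|[]]; auto.
        intros g Hg k Hk. assert (k = 0%nat) by lia; subst. apply Sg. apply Hg; left; auto.
      - destruct IH as [l [Hl1 [Hl2 Hl3]]].
        destruct (H2 f (S N)) as [Sx [HS [Sf Sg]]]. exists (Sx :: l). split; [constructor; auto|].
        split. { intros S' [E|HS']. subst; auto. apply Hl2. exact HS'. }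
        intros g Hg k Hk. destruct (Nat.eq_dec k (S N)) as [->|ne].
        + apply Sg. apply Hg; left; auto.
        + apply Hl3. intros S' HS'; apply Hg; right; auto. all: lia. }
    exists l. split; [exact Hl1|]. split; [exact Hl2|]. intros g Hg. apply HN. apply Hl3. auto.
Qed.

Lemma opt_ext (o1 o2 : option nat) : (forall x, o1 = Some x <-> o2 = Some x) -> o1 = o2.
Proof.
  intros H. destruct o1 as [a|], o2 as [b|].
  - apply H; auto.
  - pose proof (proj1 (H a) eq_refl); discriminate.
  - pose proof (proj2 (H b) eq_refl); discriminate.
  - auto.
Qed.

Lemma inv_spec f m n : pf (inv f) m = Some n <-> pf f n = Some m.
Proof.
  simpl. unfold inv_fun.
  destruct (excluded_middle_informative (exists n, pf f n = Some m)) as [Hx|Hx].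
  - destruct (constructive_indefinite_description _ Hx) as [a Ha]. simpl.
    split. intros E; injection E as <-; auto.
    intros E. f_equal. eapply (pf_inj f); eauto.
  - split. discriminate. intros E; exfalso; apply Hx; eauto.
Qed.

Lemma inv_none f m : pf (inv f) m = None <-> ~ im f m.
Proof.
  unfold im. split.
  - intros H [n Hn]. apply (proj2 (inv_spec f m n)) in Hn. congruence.
  - intros H. destruct (pf (inv f) m) as [n|] eqn:E; auto.
    apply (proj1 (inv_spec f m n)) in E. exfalso; apply H; exists n; exact E.
Qed.

Lemma inv_inv f : inv (inv f) = f.
Proof.
  apply PI_ext. intros n. apply opt_ext. intros x.
  rewrite inv_spec, inv_spec. tauto.
Qed.

Lemma comp_some f g x z : pf (comp f g) x = Some z <-> exists m, pf g x = Some m /\ pf f m = Some z.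
Proof.
  simpl. unfold comp_fun. destruct (pf g x) as [m|].
  - split. intros; eauto. intros [m' [E1 E2]]. injection E1 as ->; auto.
  - split. discriminate. intros [m' [E1 E2]]; discriminate.
Qed.

Lemma inv_comp f g : inv (comp f g) = comp (inv g) (inv f).
Proof.
  apply PI_ext. intros n. apply opt_ext. intros x.
  rewrite inv_spec, !comp_some. split.
  - intros [m [E1 E2]]. exists m. rewrite !inv_spec. auto.
  - intros [m [E1 E2]]. rewrite inv_spec in E1, E2. eauto.
Qed.

Lemma tau1_char U : tau1 U <-> (forall f, U f -> exists N, forall g, agree N g f -> U g).
Proof.
  apply (gen_char subbasis1 pf).
  - intros S [[x [y ->]]|[x ->]].
    + exists x. unfold v. intros f g Hf E. congruence.
    + exists x. unfold w1, dom. intros f g Hf E. rewrite E; exact Hf.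
  - intros f k. destruct (pf f k) as [y|] eqn:E.
    + exists (v k y). split. left; eauto. split. exact E. unfold v. intros g Hg; congruence.
    + exists (w1 k). split. right; eauto. split. unfold w1, dom; tauto.
      unfold w1, dom. intros g Hg. destruct (pf g k); auto. exfalso; apply Hg; discriminate.
Qed.

Lemma tau2_char U : tau2 U <-> (forall f, U f -> exists N, forall g, agree N (inv g) (inv f) -> U g).
Proof.
  apply (gen_char subbasis2 (fun f => pf (inv f))).
  - intros S [[x [y ->]]|[y ->]].
    + exists y. unfold v. intros f g Hf E. apply (proj2 (inv_spec f y x)) in Hf.
      apply (proj1 (inv_spec g y x)). congruence.
    + exists y. unfold w2. intros f g Hf E. apply (proj2 (inv_none f y)) in Hf.
      apply (proj1 (inv_none g y)). congruence.
  - intros f k. destruct (pf (inv f) k) as [x|] eqn:E.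
    + exists (v x k). split. left; eauto. split. unfold v. apply (proj1 (inv_spec f k x)); exact E.
      unfold v. intros g Hg. apply (proj2 (inv_spec g k x)) in Hg. congruence.
    + exists (w2 k). split. right; eauto. split. unfold w2. apply (proj1 (inv_none f k)); exact E.
      unfold w2. intros g Hg. apply (proj2 (inv_none g k)) in Hg. congruence.
Qed.

Lemma compat1 : compatible rho tau1.
Proof.
  intros U. rewrite tau1_char. symmetry. apply (metric_char (fun f => f) U).
Qed.

Lemma compat2 : compatible rho_star tau2.
Proof.
  intros U. rewrite tau2_char. symmetry. apply (metric_char inv U).
Qed.

Fixpoint mono (h : nat -> nat) (k : nat) : nat :=
  match k with 0 => h 0%nat | S k => Nat.max (mono h k) (h (S k)) end.

Lemma mono_ge h k : (h k <= mono h k)%nat.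
Proof. destruct k; simpl; lia. Qed.

Lemma mono_le h k k' : (k <= k')%nat -> (mono h k <= mono h k')%nat.
Proof. induction 1; simpl; lia. Qed.

Lemma complete_rho : metric_complete rho.
Proof.
  intros u Hc.
  assert (HA : forall k, exists N, forall m n, (N <= m)%nat -> (N <= n)%nat -> agree k (u m) (u n)).
  { intros k. destruct (Hc ((/2)^k) (half_pow_pos k)) as [N HN]. exists N; intros; apply rho_agree; auto. }
  set (Nf := fun k => proj1_sig (constructive_indefinite_description _ (HA k))).
  assert (HNf : forall k m n, (Nf k <= m)%nat -> (Nf k <= n)%nat -> agree k (u m) (u n)).
  { intros k. unfold Nf. destruct constructive_indefinite_description; simpl; auto. }
  set (M := mono Nf).
  assert (HM : forall k n, (M k <= n)%nat -> pf (u n) k = pf (u (M k)) k).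
  { intros k n H. apply (HNf k). pose proof (mono_ge Nf k). unfold M in *; lia.
    apply mono_ge. lia. }
  set (p := fun k => pf (u (M k)) k).
  assert (Hinj : forall x y z, p x = Some z -> p y = Some z -> x = y).
  { intros x y z Hx Hy. unfold p in *.
    rewrite <- (HM x (M (Nat.max x y))) in Hx by (apply mono_le; lia).
    rewrite <- (HM y (M (Nat.max x y))) in Hy by (apply mono_le; lia).
    eapply pf_inj; eauto. }
  exists (mkPI p Hinj). intros eps He. destruct (small_exists eps He) as [N HN].
  exists (M N). intros n Hn.
  assert (agree N (u n) (mkPI p Hinj)).
  { intros k Hk. simpl. unfold p. apply HM.
    pose proof (mono_le Nf k N Hk). unfold M in *. lia. }
  apply rho_small in H. lra.
Qed.

Lemma complete_rho_star : metric_complete rho_star.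
Proof.
  intros u Hc. destruct (complete_rho (fun n => inv (u n)) Hc) as [l Hl].
  exists (inv l). intros eps He. destruct (Hl eps He) as [N HN]. exists N. intros n Hn.
  unfold rho_star. rewrite inv_inv. auto.
Qed.

Lemma rho_star_metric : is_metric rho_star.
Proof.
  destruct rho_metric as [A [B [C D]]]. unfold rho_star.
  split; [|split; [|split]]; intros; auto.
  split. intros H. apply B in H. rewrite <- (inv_inv x), <- (inv_inv y), H; auto.
  intros ->. apply B; auto.
Qed.

Lemma comp_assoc f g h : comp f (comp g h) = comp (comp f g) h.
Proof.
  apply PI_ext. intros n. simpl. unfold comp_fun. simpl. unfold comp_fun.
  destruct (pf h n); reflexivity.
Qed.

Lemma val_bound (g : PI) N : exists B, forall k m, (k <= N)%nat -> pf g k = Some m -> (m <= B)%nat.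
Proof.
  induction N as [|N [B HB]].
  - destruct (pf g 0%nat) as [m0|] eqn:E.
    + exists m0. intros k m Hk Hm. assert (k = 0%nat) by lia; subst. assert (m = m0) by congruence. lia.
    + exists 0%nat. intros k m Hk Hm. assert (k = 0%nat) by lia; subst. congruence.
  - destruct (pf g (S N)) as [m0|] eqn:E.
    + exists (Nat.max B m0). intros k m Hk Hm. destruct (Nat.eq_dec k (S N)) as [->|ne].
      assert (m = m0) by congruence. lia. specialize (HB k m ltac:(lia) Hm). lia.
    + exists B. intros k m Hk Hm. destruct (Nat.eq_dec k (S N)) as [->|ne].
      congruence. apply (HB k m); auto; lia.
Qed.

Lemma comp_cont a b N : exists M1 M2, forall a' b', agree M1 a' a -> agree M2 b' b ->
  agree N (comp a' b') (comp a b).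
Proof.
  destruct (val_bound b N) as [B HB]. exists B, N. intros a' b' Ha Hb k Hk.
  simpl. unfold comp_fun. rewrite (Hb k Hk). destruct (pf b k) as [m|] eqn:E; auto.
  apply Ha. eapply HB; eauto.
Qed.

Lemma open1 M f0 : tau1 (fun h => agree M h f0).
Proof.
  apply tau1_char. intros h Hh. exists M. intros g Hg. eapply agree_trans; eauto.
Qed.

Lemma open2 M f0 : tau2 (fun h => agree M (inv h) (inv f0)).
Proof.
  apply tau2_char. intros h Hh. exists M. intros g Hg. eapply agree_trans; eauto.
Qed.

Lemma ts1 : topological_semigroup tau1.
Proof.
  split. exact comp_assoc.
  intros f g W HW Hfg. destruct (proj1 (tau1_char W) HW _ Hfg) as [N HN].
  destruct (comp_cont f g N) as [M1 [M2 HM]].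
  exists (fun h => agree M1 h f), (fun h => agree M2 h g).
  split. apply open1. split. apply open1. split. intros k _; auto. split. intros k _; auto.
  intros f' g' H1 H2. apply HN. apply HM; auto.
Qed.

Lemma ts2 : topological_semigroup tau2.
Proof.
  split. exact comp_assoc.
  intros f g W HW Hfg. destruct (proj1 (tau2_char W) HW _ Hfg) as [N HN].
  destruct (comp_cont (inv g) (inv f) N) as [M1 [M2 HM]].
  exists (fun h => agree M2 (inv h) (inv f)), (fun h => agree M1 (inv h) (inv g)).
  split. apply open2. split. apply open2. split. intros k _; auto. split. intros k _; auto.
  intros f' g' H1 H2. apply HN. rewrite !inv_comp. apply HM; auto.
Qed.

Fixpoint dec (L c : nat) : list nat :=
  match L with 0 => nil | S L => fst (of_nat c) :: dec L (snd (of_nat c)) end.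

Lemma dec_S L c : dec (S L) c = fst (of_nat c) :: dec L (snd (of_nat c)).
Proof. reflexivity. Qed.

Lemma dec_surj s : exists c, dec (length s) c = s.
Proof.
  induction s as [|a s [c Hc]]. exists 0%nat; reflexivity.
  exists (to_nat (a, c)). change (length (a :: s)) with (S (length s)).
  rewrite dec_S, cancel_of_to. simpl. rewrite Hc. reflexivity.
Qed.

Definition cand (s : list nat) (k : nat) : option nat :=
  match nth_error s k with Some (S m) => Some m | _ => None end.

Lemma empty_inj : forall x y z : nat, (fun _ : nat => @None nat) x = Some z -> (fun _ : nat => @None nat) y = Some z -> x = y.
Proof. intros; discriminate. Qed.

Definition emptyPI : PI := mkPI (fun _ => None) empty_inj.

Definition D (n : nat) : PI :=
  let (L, c) := of_nat n in
  match excluded_middle_informative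
          (forall x y z, cand (dec L c) x = Some z -> cand (dec L c) y = Some z -> x = y) with
  | left H => mkPI (cand (dec L c)) H
  | right _ => emptyPI
  end.

Lemma dense1 f N : exists n, agree N (D n) f.
Proof.
  set (s := map (fun k => match pf f k with Some m => S m | None => 0%nat end) (seq 0 (S N))).
  assert (Hs : forall k, cand s k = if Nat.leb k N then pf f k else None).
  { intros k. unfold cand, s. rewrite nth_error_map, nth_error_seq.
    destruct (Nat.ltb_spec k (S N)); destruct (Nat.leb_spec k N); try lia; simpl; auto.
    destruct (pf f k); reflexivity. }
  destruct (dec_surj s) as [c Hc].
  assert (Hl : length s = S N) by (unfold s; rewrite length_map, length_seq; reflexivity).
  rewrite Hl in Hc.
  exists (to_nat (S N, c)). unfold D. rewrite cancel_of_to. rewrite Hc.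
  destruct excluded_middle_informative as [H|H].
  - intros k Hk. simpl. rewrite Hs. destruct (Nat.leb_spec k N); auto; lia.
  - exfalso. apply H. intros x y z Hx Hy. rewrite Hs in Hx, Hy.
    destruct (Nat.leb x N), (Nat.leb y N); try discriminate. eapply pf_inj; eauto.
Qed.

Lemma sep1 : separable tau1.
Proof.
  exists D. intros U HU [x Hx]. destruct (proj1 (tau1_char U) HU x Hx) as [N HN].
  destruct (dense1 x N) as [n Hn]. exists n. apply HN. exact Hn.
Qed.

Lemma sep2 : separable tau2.
Proof.
  exists (fun n => inv (D n)). intros U HU [x Hx]. destruct (proj1 (tau2_char U) HU x Hx) as [N HN].
  destruct (dense1 (inv x) N) as [n Hn]. exists n. apply HN. rewrite inv_inv. exact Hn.
Qed.

Theorem theorem4p3 :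
  (polish tau1 /\ topological_semigroup tau1 /\
   is_metric rho /\ metric_complete rho /\ compatible rho tau1) /\
  (polish tau2 /\ topological_semigroup tau2 /\
   is_metric rho_star /\ metric_complete rho_star /\ compatible rho_star tau2).
Proof.
  split.
  - split. split. exact sep1. exists rho. auto using rho_metric, complete_rho, compat1.
    auto using ts1, rho_metric, complete_rho, compat1.
  - split. split. exact sep2. exists rho_star. auto using rho_star_metric, complete_rho_star, compat2.
    auto using ts2, rho_star_metric, complete_rho_star, compat2.
Qed.
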